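(* Let $J'=(z_w,z_w')$ be a nonempty open interval, let $r:J'\to\mathbb{R}$ be differentiable and non-increasing, and let $h:J'\to\mathbb{R}$ be differentiable with $\dot h(z)=1+h(z)^2-2r(z)h(z)$ on $J'$, having exactly one zero $z_*\in J'$. Let $G(z)=z-\dfrac{2h(z)}{2+h(z)^2-2r(z)h(z)}$ and $z_{n+1}=G(z_n)$. (1) If $0<r(z)<1$ for all $z\in(z_*,z_w')$, then for every $z_0\in(z_*,z_w')$ all iterates are well defined, and $(z_n)$ is monotonically decreasing, stays in $(z_*,z_w')$, and converges to $z_*$. (2) If $-1<r(z)<0$ for all $z\in(z_w,z_* )$, then for every $z_0\in(z_w,z_* )$ all iterates are well defined, and $(z_n)$ is monotonically increasing, stays in $(z_w,z_* )$, and converges to $z_*$.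
   Context: $\dot{}$ denotes differentiation with respect to $z$. Here $h<0$ on $(z_w,z_* )$ and $h>0$ on $(z_*,z_w')$. *)

(* Defs.v *)
From Stdlib Require Export Reals.
Open Scope R_scope.

Definition denomG (r h : R -> R) (z : R) : R := 2 + h z ^ 2 - 2 * r z * h z.
Definition Gmap (r h : R -> R) (z : R) : R := z - 2 * h z / denomG r h z.

Definition iterG (r h : R -> R) (z0 : R) (n : nat) : R := Nat.iter n (Gmap r h) z0.

(* Main.v *)
Require Import Defs.
From Stdlib Require Import Reals Lra Psatz.
From Coquelicot Require Import Coquelicot.
Open Scope R_scope.
Lemma phi_deriv (h : R -> R) (zs rho c hp : R) :
  0 < rho < 1 -> derivable_pt_lim h c hp ->
  derivable_pt_lim (fun t => (t - zs) - 2 * h t / (2 + h t ^ 2 - 2 * rho * h t)) c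
    (1 - (4 - 2 * h c ^ 2) / (2 + h c ^ 2 - 2 * rho * h c) ^ 2 * hp).
Proof.
  intros Hr Hd. apply is_derive_Reals. apply is_derive_Reals in Hd.
  assert (Hpos : 2 + h c ^ 2 - 2 * rho * h c > 0) by (pose proof (pow2_ge_0 (h c - rho)); nra).
  auto_derive.
  - assert (E : ex_derive (fun x => h x) c) by (exists hp; exact Hd).
    repeat split; try exact E. lra.
  - replace (Derive (fun x => h x) c) with hp by (symmetry; apply is_derive_unique; exact Hd).
    field. lra.
Qed.
Lemma incr (zs b : R) (r h : R -> R) :
  (forall z, zs <= z < b -> derivable_pt_lim h z (1 + h z ^ 2 - 2 * r z * h z)) ->
  (forall z, zs < z < b -> 0 < r z < 1) ->
  forall x y, zs <= x -> x < y -> y < b -> h x < h y.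
Proof.
  intros Hd Hr x y Hx Hxy Hy.
  destruct (MVT_cor2 h (fun z => 1 + h z ^ 2 - 2 * r z * h z) x y Hxy) as [c [E Hc]].
  { intros c Hc. apply Hd. lra. }
  assert (Hrc := Hr c ltac:(lra)).
  assert (0 < 1 + h c ^ 2 - 2 * r c * h c) by (pose proof (pow2_ge_0 (h c - r c)); nra).
  nra.
Qed.

Lemma key (zs b : R) (r h : R -> R) :
  (forall x y, zs < x < b -> zs < y < b -> x <= y -> r y <= r x) ->
  (forall z, zs <= z < b -> derivable_pt_lim h z (1 + h z ^ 2 - 2 * r z * h z)) ->
  h zs = 0 ->
  (forall z, zs < z < b -> 0 < r z < 1) ->
  forall z, zs < z < b -> zs < Gmap r h z.
Proof.
  intros Hm Hd H0 Hr z Hz.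
  set (rho := r z).
  assert (Hrho : 0 < rho < 1) by (apply Hr; exact Hz).
  destruct (MVT_cor2 (fun t => (t - zs) - 2 * h t / (2 + h t ^ 2 - 2 * rho * h t))
    (fun c => 1 - (4 - 2 * h c ^ 2) / (2 + h c ^ 2 - 2 * rho * h c) ^ 2 *
                 (1 + h c ^ 2 - 2 * r c * h c)) zs z ltac:(lra)) as [c [E Hc]].
  { intros c Hc. apply phi_deriv; [exact Hrho|]. apply Hd. lra. }
  rewrite H0 in E.
  assert (Hy : 0 < h c) by (rewrite <- H0; apply (incr zs b r h Hd Hr); lra).
  assert (Hrc := Hr c ltac:(lra)).
  assert (Hrr : rho <= r c) by (apply Hm; lra).
  set (y := h c) in *. set (p := 1 + y ^ 2 - 2 * r c * y) in *.
  assert (Hp : 0 < p) by (unfold p; pose proof (pow2_ge_0 (y - r c)); nra).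
  set (q := 1 + y ^ 2 - 2 * rho * y).
  assert (Hq : 0 < q) by (unfold q; pose proof (pow2_ge_0 (y - rho)); nra).
  assert (Hpq : p <= q) by (unfold p, q; nra).
  assert (HD : 2 + y ^ 2 - 2 * rho * y = q + 1) by (unfold q; ring).
  rewrite HD in E.
  assert (Hlt : (4 - 2 * y ^ 2) * p < (q + 1) ^ 2).
  { destruct (Rle_or_lt (4 - 2 * y ^ 2) 0) as [Hn|Hn].
    - assert ((4 - 2 * y ^ 2) * p <= 0) by nra. nra.
    - assert ((4 - 2 * y ^ 2) * p <= (4 - 2 * y ^ 2) * q) by nra.
      assert (0 < y ^ 2 * q) by (apply Rmult_lt_0_compat; nra).
      pose proof (pow2_ge_0 (q - 1)). nra. }
  assert (Hphi : 0 < 1 - (4 - 2 * y ^ 2) / (q + 1) ^ 2 * p).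
  { assert (0 < (q+1)^2) by nra.
    assert ((4 - 2 * y ^ 2) / (q + 1) ^ 2 * p < 1).
    { unfold Rdiv. rewrite Rmult_assoc, (Rmult_comm (/ _)), <- Rmult_assoc.
      apply (Rmult_lt_reg_r ((q+1)^2)); [lra|].
      rewrite Rmult_assoc, Rinv_l by lra. lra. }
    lra. }
  assert (Hpos : 0 < z - zs - 2 * h z / (2 + h z ^ 2 - 2 * rho * h z)).
  { replace (2 * 0 / (2 + 0 ^ 2 - 2 * rho * 0)) with 0 in E by field.
    nra. }
  unfold Gmap, denomG. fold rho. lra.
Qed.
Lemma iterS (r h : R -> R) z0 n : iterG r h z0 (S n) = Gmap r h (iterG r h z0 n).
Proof. reflexivity. Qed.

Lemma core (zs b : R) (r h : R -> R) :
  zs < b ->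
  (forall x y, zs < x < b -> zs < y < b -> x <= y -> r y <= r x) ->
  (forall z, zs <= z < b -> derivable_pt_lim h z (1 + h z ^ 2 - 2 * r z * h z)) ->
  h zs = 0 ->
  (forall z, zs < z < b -> 0 < r z < 1) ->
  forall z0, zs < z0 < b ->
    (forall n, zs < iterG r h z0 n < b
               /\ denomG r h (iterG r h z0 n) <> 0
               /\ iterG r h z0 (S n) < iterG r h z0 n)
    /\ Un_cv (iterG r h z0) zs.
Proof.
  intros Hb Hm Hd H0 Hr z0 Hz0.
  assert (Hhp : forall z, zs < z < b -> 0 < h z)
    by (intros z Hz; rewrite <- H0; apply (incr zs b r h Hd Hr); lra).
  assert (HD : forall z, zs < z < b -> 0 < denomG r h z).
  { intros z Hz. unfold denomG. assert (Hrz := Hr z Hz).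
    pose proof (pow2_ge_0 (h z - r z)). nra. }
  assert (Hstep : forall z, zs < z < b -> zs < Gmap r h z < z).
  { intros z Hz. split; [apply (key zs b r h Hm Hd H0 Hr z Hz)|].
    unfold Gmap. assert (0 < 2 * h z / denomG r h z).
    { apply Rdiv_lt_0_compat; [assert (Hz' := Hhp z Hz); lra | apply HD; exact Hz]. }
    lra. }
  assert (Hinv : forall n, zs < iterG r h z0 n < b /\ denomG r h (iterG r h z0 n) <> 0
               /\ iterG r h z0 (S n) < iterG r h z0 n).
  { induction n as [|n IH].
    - simpl. assert (Hs := Hstep z0 Hz0). assert (Hd0 := HD z0 Hz0).
      repeat split; try lra.
    - destruct IH as [[I1 I2] [_ I3]]. rewrite iterS in I3.
      assert (Hs := Hstep (iterG r h z0 n) ltac:(lra)).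
      assert (J : zs < Gmap r h (iterG r h z0 n) < b) by lra.
      assert (Hs2 := Hstep _ J). assert (Hd2 := HD _ J).
      change (iterG r h z0 (S (S n))) with (Gmap r h (Gmap r h (iterG r h z0 n))).
      change (iterG r h z0 (S n)) with (Gmap r h (iterG r h z0 n)).
      repeat split; lra. }
  split; [exact Hinv|].
  assert (Hmono : forall N k, iterG r h z0 (k + N) <= iterG r h z0 N).
  { intros N k. induction k as [|k IH]; [simpl; lra|].
    change (S k + N)%nat with (S (k + N)).
    destruct (Hinv (k + N)%nat) as [_ [_ H]]. lra. }
  assert (Hle0 : forall n, iterG r h z0 n <= z0).
  { intros n. replace n with (n + 0)%nat by lia. apply (Hmono 0%nat n). }
  intros eps Heps.
  assert (Hex : exists N, iterG r h z0 N < zs + eps).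
  { destruct (Rlt_or_le z0 (zs + eps)) as [Hl|Hl]; [exists 0%nat; exact Hl|].
    apply Classical_Prop.NNPP. intros Hno.
    assert (Hall : forall n, zs + eps <= iterG r h z0 n).
    { intros n. apply Rnot_lt_le. intros Hc. apply Hno. exists n. exact Hc. }
    assert (Hc : 0 < h (zs + eps)) by (apply Hhp; lra).
    set (c := 2 * h (zs + eps) / (2 + h z0 ^ 2)).
    assert (Hcpos : 0 < c) by (unfold c; apply Rdiv_lt_0_compat; nra).
    assert (Hdec : forall n, iterG r h z0 (S n) <= iterG r h z0 n - c).
    { intros n. rewrite iterS. set (x := iterG r h z0 n).
      assert (Hx1 := Hall n). assert (Hx2 := Hle0 n). fold x in Hx1, Hx2.
      destruct (Hinv n) as [[I1 I2] _]. fold x in I1, I2.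
      assert (Hhx : h (zs + eps) <= h x).
      { destruct (Req_dec (zs + eps) x) as [E|E]; [rewrite E; lra|].
        left. apply (incr zs b r h Hd Hr); lra. }
      assert (Hhx0 : h x <= h z0).
      { destruct (Req_dec x z0) as [E|E]; [rewrite E; lra|].
        left. apply (incr zs b r h Hd Hr); lra. }
      assert (Hxp := Hhp x ltac:(lra)). assert (Hrx := Hr x ltac:(lra)).
      assert (HDx := HD x ltac:(lra)).
      assert (HDle : denomG r h x <= 2 + h z0 ^ 2) by (unfold denomG; nra).
      unfold Gmap.
      assert (c <= 2 * h x / denomG r h x).
      { unfold c. apply (Rle_trans _ (2 * h x / (2 + h z0 ^ 2))).
        - unfold Rdiv. apply Rmult_le_compat_r; [left; apply Rinv_0_lt_compat; nra | lra].
        - unfold Rdiv. apply Rmult_le_compat_l; [lra|].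
          apply Rinv_le_contravar; lra. }
      lra. }
    assert (Hlin : forall n, iterG r h z0 n <= z0 - INR n * c).
    { induction n as [|n IH]; [simpl; lra|]. rewrite S_INR.
      specialize (Hdec n). lra. }
    destruct (INR_archimed c (z0 - zs) Hcpos) as [n Hn].
    specialize (Hlin n). specialize (Hall n). lra. }
  destruct Hex as [N HN]. exists N. intros n Hn.
  replace n with ((n - N) + N)%nat by lia.
  assert (Hm1 := Hmono N (n - N)%nat).
  destruct (Hinv ((n - N) + N)%nat) as [[I1 _] _].
  unfold Rdist. rewrite Rabs_right by lra. lra.
Qed.
Lemma refl_iter (r h : R -> R) z0 n :
  iterG (fun t => - r (- t)) (fun t => - h (- t)) (- z0) n = - iterG r h z0 n.
Proof.
  induction n as [|n IH]; [reflexivity|].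
  rewrite !iterS, IH. unfold Gmap, denomG. rewrite !Ropp_involutive.
  replace (2 + (- h (iterG r h z0 n)) ^ 2 - 2 * - r (iterG r h z0 n) * - h (iterG r h z0 n))
    with (2 + h (iterG r h z0 n) ^ 2 - 2 * r (iterG r h z0 n) * h (iterG r h z0 n)) by ring.
  unfold Rdiv. ring.
Qed.

Lemma refl_denom (r h : R -> R) x :
  denomG (fun t => - r (- t)) (fun t => - h (- t)) (- x) = denomG r h x.
Proof. unfold denomG. rewrite !Ropp_involutive. ring. Qed.

Theorem theorem3p4 (zw zw' zs : R) (r h : R -> R) :
  zw < zw' ->
  (forall z, zw < z < zw' -> exists l, derivable_pt_lim r z l) ->
  (forall x y, zw < x < zw' -> zw < y < zw' -> x <= y -> r y <= r x) ->
  (forall z, zw < z < zw' ->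
     derivable_pt_lim h z (1 + h z ^ 2 - 2 * r z * h z)) ->
  zw < zs < zw' -> h zs = 0 ->
  (forall z, zw < z < zw' -> h z = 0 -> z = zs) ->
  ( (forall z, zs < z < zw' -> 0 < r z < 1) ->
    forall z0, zs < z0 < zw' ->
      (forall n, zs < iterG r h z0 n < zw'
                 /\ denomG r h (iterG r h z0 n) <> 0
                 /\ iterG r h z0 (S n) < iterG r h z0 n)
      /\ Un_cv (iterG r h z0) zs )
  /\
  ( (forall z, zw < z < zs -> -1 < r z < 0) ->
    forall z0, zw < z0 < zs ->
      (forall n, zw < iterG r h z0 n < zs
                 /\ denomG r h (iterG r h z0 n) <> 0
                 /\ iterG r h z0 n < iterG r h z0 (S n))
      /\ Un_cv (iterG r h z0) zs ).
Proof.
  intros Hw _ Hm Hd Hs H0 _. split.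
  - intros Hr z0 Hz0. apply (core zs zw' r h); try lra; try assumption.
    + intros x y Hx Hy Hxy. apply Hm; lra.
    + intros z Hz. apply Hd. lra.
  - intros Hr z0 Hz0.
    assert (C := core (- zs) (- zw) (fun t => - r (- t)) (fun t => - h (- t))
      ltac:(lra)).
    destruct C with (z0 := - z0) as [C1 C2].
    + intros x y Hx Hy Hxy. apply Ropp_le_contravar. apply Hm; lra.
    + intros z Hz. assert (D := Hd (- z) ltac:(lra)).
      intros eps Heps. destruct (D eps Heps) as [del Hdel].
      exists del. intros dh Hdh0 Hdh.
      assert (Hdh0' : - dh <> 0) by lra.
      assert (Hdh' : Rabs (- dh) < del) by (rewrite Rabs_Ropp; exact Hdh).
      specialize (Hdel (- dh) Hdh0' Hdh').
      cbv beta.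
      replace (- z + - dh) with (- (z + dh)) in Hdel by ring.
      replace ((- h (- (z + dh)) - - h (- z)) / dh - (1 + (- h (- z)) ^ 2 - 2 * - r (- z) * - h (- z)))
        with ((h (- (z + dh)) - h (- z)) / - dh - (1 + h (- z) ^ 2 - 2 * r (- z) * h (- z)))
        by (field; exact Hdh0).
      exact Hdel.
    + cbv beta. rewrite Ropp_involutive. lra.
    + cbv beta. intros z Hz. assert (H := Hr (- z) ltac:(lra)). lra.
    + lra.
    + split.
      * intros n. destruct (C1 n) as [[A1 A2] [A3 A4]].
        rewrite refl_iter in A1, A2, A3, A4. rewrite refl_denom in A3.
        split; [lra | split; [exact A3 | rewrite refl_iter in A4; lra]].
      * intros eps Heps. destruct (C2 eps Heps) as [N HN]. exists N.
        intros n Hn. specialize (HN n Hn). unfold Rdist in *.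
        rewrite refl_iter in HN.
        replace (- iterG r h z0 n - - zs) with (- (iterG r h z0 n - zs)) in HN by ring.
        rewrite Rabs_Ropp in HN. exact HN.
Qed.
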